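(* Let $G_i\leq\mathrm{Sym}(n_i)$ for $1\leq i\leq k$ and let $G=G_1\times\cdots\times G_k$ be their external direct product acting on $[n_1]\times\cdots\times[n_k]$ by $(x_1,\dots,x_k)^{(g_1,\dots,g_k)}=(x_1^{g_1},\dots,x_k^{g_k})$. Then \[\alpha(\Gamma_G)=\alpha(\Gamma_{G_1})\cdots\alpha(\Gamma_{G_k}).\]
   Context: For a permutation group $G$ acting on a set, the derangement graph $\Gamma_G$ has vertex set $G$, with $\sigma,\pi$ adjacent iff $\sigma\pi^{-1}$ has no fixed point. $\alpha(X)$ denotes the size of a largest independent set in a graph $X$. *)

(* Defs.v *)
From mathcomp Require Import all_boot all_fingroup.
Set Implicit Arguments. Unset Strict Implicit. Unset Printing Implicit Defensive.
Local Open Scope group_scope.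

(* Derangement graph of a permutation group G <= Sym(T): vertices are the
   elements of G; s, p adjacent iff s * p^-1 has no fixed point in T. *)
Definition der_indep (T : finType) (G S : {set {perm T}}) : bool :=
  (S \subset G) &&
  [forall s in S, forall p in S, (s != p) ==> [exists x : T, (s * p^-1) x == x]].

Definition der_alpha (T : finType) (G : {set {perm T}}) : nat :=
  \max_(S : {set {perm T}} | der_indep G S) #|S|.

(* External direct product G_1 x ... x G_k of G_i <= Sym(n_i), as the set
   of tuples (g_1,...,g_k) with g_i in G_i, multiplied componentwise and
   acting on [n_1] x ... x [n_k] coordinatewise. *)
Definition prod_elt (k : nat) (n : 'I_k -> nat) :=
  {dffun forall i : 'I_k, {perm 'I_(n i)}}.
Definition prod_pt (k : nat) (n : 'I_k -> nat) :=
  {dffun forall i : 'I_k, 'I_(n i)}.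

Definition prod_group (k : nat) (n : 'I_k -> nat)
  (Gs : forall i : 'I_k, {group {perm 'I_(n i)}}) : {set prod_elt n} :=
  [set g : prod_elt n | [forall i, g i \in Gs i]].

Definition prod_has_fix (k : nat) (n : 'I_k -> nat) (s p : prod_elt n) : bool :=
  [exists x : prod_pt n, [forall i, (s i * (p i)^-1) (x i) == x i]].

Definition prod_indep (k : nat) (n : 'I_k -> nat)
  (Gs : forall i : 'I_k, {group {perm 'I_(n i)}}) (S : {set prod_elt n}) : bool :=
  (S \subset prod_group Gs) &&
  [forall s in S, forall p in S, (s != p) ==> prod_has_fix s p].

Definition prod_alpha (k : nat) (n : 'I_k -> nat)
  (Gs : forall i : 'I_k, {group {perm 'I_(n i)}}) : nat :=
  \max_(S : {set prod_elt n} | prod_indep Gs S) #|S|.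

(* Main.v *)
Require Import Defs.
From mathcomp Require Import all_boot all_fingroup.
Set Implicit Arguments. Unset Strict Implicit. Unset Printing Implicit Defensive.


Section L.
Variables (k : nat) (n : 'I_k -> nat).

Lemma fixP (s p : prod_elt n) :
  prod_has_fix s p = [forall i, [exists x, ((s i * (p i)^-1)%g x == x)]].
Proof.
apply/idP/idP.
  case/existsP=> x /forallP H; apply/forallP=> i; apply/existsP; exists (x i); exact: H.
move/forallP=> H; apply/existsP.
exists (finfun (fun i => xchoose (existsP (H i)))); apply/forallP=> i.
by rewrite ffunE; exact: (xchooseP (existsP (H i))).
Qed.

End L.

Theorem lemma14 (k : nat) (n : 'I_k -> nat) (n_gt0 : forall i, 0 < n i)
  (Gs : forall i : 'I_k, {group {perm 'I_(n i)}}) :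
  prod_alpha Gs = \prod_(i < k) der_alpha (Gs i).
Proof.
apply/eqP; rewrite eqn_leq; apply/andP; split.
  apply/bigmax_leqP=> S /andP[sSG /forall_inP indS].
  pose P i := [set (g : prod_elt n) i | g in S].
  have PI i : der_indep (Gs i) (P i).
    apply/andP; split.
      apply/subsetP=> _ /imsetP[g gS ->].
      by move/subsetP: sSG => /(_ g gS); rewrite inE => /forallP; apply.
    apply/forall_inP=> _ /imsetP[s sS ->]; apply/forall_inP=> _ /imsetP[p pS ->].
    apply/implyP=> nsp.
    have nsp' : s != p by apply: contraNneq nsp => ->.
    move/forall_inP: (indS s sS) => /(_ p pS); rewrite nsp' /= fixP.
    by move/forallP/(_ i).
  apply: (@leq_trans #|setXn P|).
    apply/subset_leq_card/subsetP=> g gS; apply/setXnP=> i.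
    by apply/imsetP; exists g.
  rewrite cardsXn; apply: leq_prod=> i _.
  exact: (leq_bigmax_cond (P i) (PI i)).
have ex i : {S0 | der_indep (Gs i) S0 & der_alpha (Gs i) = #|S0|}.
  have nz : 0 < #|[pred S : {set {perm 'I_(n i)}} | der_indep (Gs i) S]|.
    apply/card_gt0P; exists set0; rewrite inE /der_indep sub0set /=.
    by apply/forall_inP=> s; rewrite inE.
  have [S0 HS0 E] := eq_bigmax_cond (fun S : {set {perm 'I_(n i)}} => #|S|) nz.
  by exists S0.
pose A i := sval (ex i).
have AI i : der_indep (Gs i) (A i) by rewrite /A; case: (ex i).
have AE i : der_alpha (Gs i) = #|A i| by rewrite /A; case: (ex i).
rewrite (eq_bigr _ (fun i _ => AE i)) -cardsXn.
apply: leq_bigmax_cond; apply/andP; split.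
  apply/subsetP=> g /setXnP gA; rewrite inE; apply/forallP=> i.
  by case/andP: (AI i) => /subsetP H _; apply: H (gA i).
apply/forall_inP=> s /setXnP sA; apply/forall_inP=> p /setXnP pA.
apply/implyP=> _; rewrite fixP; apply/forallP=> i.
have [e|ne] := eqVneq (s i) (p i).
  apply/existsP; exists (Ordinal (n_gt0 i)); by rewrite e mulgV perm1.
case/andP: (AI i) => _ /forall_inP /(_ _ (sA i)) /forall_inP /(_ _ (pA i)).
by rewrite ne.
Qed.
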